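(* Let $M=\{1,\dots,m\}$ carry the measure $\mu$ with atoms of positive masses $\mu_1,\dots,\mu_m$, and $N=\{1,\dots,n\}$ the measure $\nu$ with atoms of positive masses $\nu_1,\dots,\nu_n$. For real $m\times n$ matrices $a$ set $$\|a\|=\max_{i\in M}\sum_{j\in N}|a(i,j)|\nu_j,\qquad \|a\|^{\top}=\max_{j\in N}\sum_{i\in M}|a(i,j)|\mu_i,\qquad \|a\|_{\ell^1}=\sum_{(i,j)\in M\times N}|a(i,j)|\mu_i\nu_j,$$ and for $t>0$ $$|||a|||_t=\sup_{E,F}\big(\mu(E)\vee t^{-1}\nu(F)\big)^{-1}\,\|1_{E\times F}\cdot a\|_{\ell^1},$$ the supremum over nonempty $E\subset M$, $F\subset N$. Let $K_t(a)=\inf\{\|b\|+t\|c\|^{\top}: a=b+c\}$. Let $t>0$. Then for any matrix $a$ with $|||a|||_t\le 1$ there is a splitting $M\times N=A\cup B$ with $A\cap B=\emptyset$ such that $$\|1_A\cdot a\|\le 1,\qquad \|1_B\cdot a\|^{\top}\le 1/t;$$ consequently $K_t(a)\le 2\,|||a|||_t$ for every matrix $a$.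
   Context: $1_S$ denotes the indicator function of a set $S\subset M\times N$, and $\cdot$ denotes entrywise (pointwise) multiplication of matrices: $(b\cdot c)(i,j)=b(i,j)c(i,j)$. $u\vee v=\max(u,v)$. *)

(* Defs.v *)
From mathcomp Require Import all_boot all_order all_algebra.
From mathcomp Require Import boolp classical_sets reals.
Set Implicit Arguments. Unset Strict Implicit. Unset Printing Implicit Defensive.
Import Order.TTheory GRing.Theory Num.Theory.
Local Open Scope ring_scope.

Section Defs.
Variables (R : realType) (m n : nat).

Definition mass k (w : 'I_k -> R) (E : {set 'I_k}) : R := \sum_(i in E) w i.

Definition rownorm (nu : 'I_n -> R) (a : 'M[R]_(m, n)) : R :=
  \big[Num.max/0]_(i < m) \sum_(j < n) `|a i j| * nu j.

Definition colnorm (mu : 'I_m -> R) (a : 'M[R]_(m, n)) : R :=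
  \big[Num.max/0]_(j < n) \sum_(i < m) `|a i j| * mu i.

Definition l1norm (mu : 'I_m -> R) (nu : 'I_n -> R) (a : 'M[R]_(m, n)) : R :=
  \sum_(i < m) \sum_(j < n) `|a i j| * mu i * nu j.

Definition restr (S : {set 'I_m * 'I_n}) (a : 'M[R]_(m, n)) : 'M[R]_(m, n) :=
  \matrix_(i, j) (if (i, j) \in S then a i j else 0).

(* |||a|||_t : sup over nonempty E, F (finite, hence a max; all terms >= 0) *)
Definition tnorm (mu : 'I_m -> R) (nu : 'I_n -> R) (t : R) (a : 'M[R]_(m, n)) : R :=
  \big[Num.max/0]_(E : {set 'I_m} | E != finset.set0)
    \big[Num.max/0]_(F : {set 'I_n} | F != finset.set0)
      ((Num.max (mass mu E) (t^-1 * mass nu F))^-1 * l1norm mu nu (restr (finset.setX E F) a)).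

Definition Kt (mu : 'I_m -> R) (nu : 'I_n -> R) (t : R) (a : 'M[R]_(m, n)) : R :=
  inf (fun x : R => exists b c : 'M[R]_(m, n),
         a = b + c /\ x = rownorm nu b + t * colnorm mu c).

End Defs.

(* Main.v *)
Require Import Defs.
From mathcomp Require Import all_boot all_order all_algebra.
From mathcomp Require Import boolp classical_sets reals.
Import Order.TTheory GRing.Theory Num.Theory.
Local Open Scope ring_scope.

Definition XX (R : realType) (m n : nat) (mu : 'I_m -> R) (nu : 'I_n -> R)
  (a : 'M[R]_(m, n)) (E : {set 'I_m}) (F : {set 'I_n}) : R :=
  \sum_(i in E) \sum_(j in F) `|a i j| * mu i * nu j.
Arguments XX {R m n}.

Lemma split_core (R : realType) (m n : nat)
  (mu : 'I_m -> R) (nu : 'I_n -> R)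
  (hmu : forall i, 0 < mu i) (hnu : forall j, 0 < nu j)
  (t : R) (ht : 0 < t) (a : 'M[R]_(m, n)) (s : R) (hs : 0 <= s)
  (H : forall E F, E != finset.set0 -> F != finset.set0 ->
        XX mu nu a E F <= s * Num.max (mass mu E) (t^-1 * mass nu F)) :
  forall k (Rs : {set 'I_m}) (Cs : {set 'I_n}), (#|Rs| + #|Cs| <= k)%N ->
  exists A : {set 'I_m * 'I_n},
    (forall i, i \in Rs -> \sum_(j in Cs | (i, j) \in A) `|a i j| * nu j <= s) /\
    (forall j, j \in Cs -> \sum_(i in Rs | (i, j) \notin A) `|a i j| * mu i <= s / t).
Proof.
have hst : 0 <= s / t by rewrite divr_ge0 // ltW.
have empR : forall Cs : {set 'I_n}, exists A : {set 'I_m * 'I_n},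
    (forall i, i \in finset.set0 -> \sum_(j in Cs | (i, j) \in A) `|a i j| * nu j <= s) /\
    (forall j, j \in Cs -> \sum_(i in finset.set0 | (i, j) \notin A) `|a i j| * mu i <= s / t).
  move=> Cs; exists finset.set0; split=> [i|j _]; first by rewrite finset.in_set0.
  by rewrite big1 // => i; rewrite finset.in_set0.
have empC : forall Rs : {set 'I_m}, exists A : {set 'I_m * 'I_n},
    (forall i, i \in Rs -> \sum_(j in finset.set0 | (i, j) \in A) `|a i j| * nu j <= s) /\
    (forall j, j \in finset.set0 -> \sum_(i in Rs | (i, j) \notin A) `|a i j| * mu i <= s / t).
  move=> Rs; exists finset.set0; split=> [i _|j]; last by rewrite finset.in_set0.
  by rewrite big1 // => j; rewrite finset.in_set0.
elim=> [|k IH] Rs Cs hk.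
  have /eqP -> : Rs == finset.set0 by rewrite -cards_eq0; case: #|Rs| hk.
  exact: empR.
have [->|RsN] := eqVneq Rs finset.set0; first exact: empR.
have [->|CsN] := eqVneq Cs finset.set0; first exact: empC.
case: (boolP [exists i in Rs, \sum_(j in Cs) `|a i j| * nu j <= s]).
  case/exists_inP=> i iR hi.
  have hk' : (#|Rs :\ i| + #|Cs| <= k)%N.
    by move: hk; rewrite (cardsD1 i Rs) iR.
  have [A' [h1 h2]] := IH _ _ hk'.
  exists (A' :|: finset.setX [set i] [set: 'I_n]); split.
    move=> i' i'R; have [->|ne] := eqVneq i' i.
      apply: le_trans hi; rewrite le_eqVlt; apply/orP; left; apply/eqP.
      by apply: eq_bigl => j; rewrite !inE eqxx /= orbT andbT.
    apply: le_trans (h1 i' _); last by rewrite !inE ne.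
    rewrite le_eqVlt; apply/orP; left; apply/eqP.
    by apply: eq_bigl => j; rewrite !inE (negbTE ne) /= orbF.
  move=> j jC; apply: le_trans (h2 j jC).
  rewrite le_eqVlt; apply/orP; left; apply/eqP.
  apply: eq_bigl => i'; rewrite !inE /=.
  by case: (i' == i); case: (i' \in Rs); case: ((i', j) \in A').
rewrite negb_exists_in => /forall_inP hR.
case: (boolP [exists j in Cs, \sum_(i in Rs) `|a i j| * mu i <= s / t]).
  case/exists_inP=> j jC hj.
  have hk' : (#|Rs| + #|Cs :\ j| <= k)%N.
    by move: hk; rewrite (cardsD1 j Cs) jC addnS.
  have [A' [h1 h2]] := IH _ _ hk'.
  exists (A' :\: finset.setX [set: 'I_m] [set j]); split; last first.
    move=> j' j'C; have [->|ne] := eqVneq j' j.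
      apply: le_trans hj; rewrite le_eqVlt; apply/orP; left; apply/eqP.
      by apply: eq_bigl => i; rewrite !inE eqxx /= andbT.
    apply: le_trans (h2 j' _); last by rewrite !inE ne.
    rewrite le_eqVlt; apply/orP; left; apply/eqP.
    by apply: eq_bigl => i; rewrite !inE (negbTE ne) /=.
  move=> i iR; apply: le_trans (h1 i iR).
  rewrite le_eqVlt; apply/orP; left; apply/eqP.
  apply: eq_bigl => j'; rewrite !inE /=.
  by case: (j' == j); case: (j' \in Cs); case: ((i, j') \in A').
rewrite negb_exists_in => /forall_inP hC.
exfalso.
have HX := H _ _ RsN CsN.
have X1 : s * mass mu Rs < XX mu nu a Rs Cs.
  rewrite /mass /XX mulr_sumr; apply: ltr_sum.
    by case/set0Pn: RsN => i iR; apply/hasP; exists i; rewrite ?mem_index_enum.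
  move=> i iR; under [X in _ < X]eq_bigr do rewrite mulrAC.
  rewrite -mulr_suml [s * _]mulrC [X in _ < X]mulrC ltr_pM2l // ltNge.
  exact: hR.
have X2 : s * (t^-1 * mass nu Cs) < XX mu nu a Rs Cs.
  rewrite /mass /XX exchange_big /= mulrA mulr_sumr; apply: ltr_sum.
    by case/set0Pn: CsN => i iR; apply/hasP; exists i; rewrite ?mem_index_enum.
  move=> j jC; rewrite -mulr_suml mulrC [X in _ < X]mulrC ltr_pM2l // ltNge.
  exact: hC.
have [h|h] := leP (mass mu Rs) (t^-1 * mass nu Cs).
  by move: HX; rewrite (max_r h) leNgt X2.
by move: HX; rewrite (max_l (ltW h)) leNgt X1.
Qed.

Lemma bigmax0_ge0 (R : realType) (I : finType) (P : pred I) (F : I -> R) :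
  0 <= \big[Num.max/0]_(i | P i) F i.
Proof. exact: bigmax_ge_id. Qed.

Lemma l1_XX (R : realType) (m n : nat) (mu : 'I_m -> R) (nu : 'I_n -> R)
  (a : 'M[R]_(m, n)) E F :
  l1norm mu nu (restr (finset.setX E F) a) = XX mu nu a E F.
Proof.
rewrite /l1norm /XX [RHS]big_mkcond /=; apply: eq_bigr => i _.
case: (boolP (i \in E)) => iE.
  rewrite [RHS]big_mkcond /=; apply: eq_bigr => j _.
  rewrite mxE !inE /= iE /=; case: (j \in F) => //.
  by rewrite normr0 !mul0r.
by rewrite big1 // => j _; rewrite mxE !inE /= (negbTE iE) /= normr0 !mul0r.
Qed.

Lemma mass_gt0 (R : realType) k (w : 'I_k -> R) (hw : forall i, 0 < w i) E :
  E != finset.set0 -> 0 < mass w E.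
Proof.
case/set0Pn => i iE; rewrite /mass (bigD1 i) //=.
by rewrite ltr_pwDl // ?hw // sumr_ge0 // => j _; rewrite ltW.
Qed.

Lemma tnorm_bound (R : realType) (m n : nat)
  (mu : 'I_m -> R) (nu : 'I_n -> R)
  (hmu : forall i, 0 < mu i) (hnu : forall j, 0 < nu j)
  (t : R) (ht : 0 < t) (a : 'M[R]_(m, n)) E F :
  E != finset.set0 -> F != finset.set0 ->
  XX mu nu a E F <= tnorm mu nu t a * Num.max (mass mu E) (t^-1 * mass nu F).
Proof.
move=> EN FN.
have hpos : 0 < Num.max (mass mu E) (t^-1 * mass nu F).
  by rewrite lt_max mass_gt0.
rewrite -l1_XX mulrC -ler_pdivrMl //.
rewrite /tnorm; apply: (bigmax_sup E) => //; exact: (bigmax_sup F).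
Qed.

Lemma sum_restr (R : realType) (m n : nat) (w : 'I_n -> R)
  (a : 'M[R]_(m, n)) A i :
  \sum_(j < n) `|restr A a i j| * w j = \sum_(j in [set: 'I_n] | (i, j) \in A) `|a i j| * w j.
Proof.
rewrite [RHS]big_mkcond /=; apply: eq_bigr => j _; rewrite mxE inE /=.
by case: ((i, j) \in A) => //; rewrite normr0 mul0r.
Qed.

Lemma sum_restrT (R : realType) (m n : nat) (w : 'I_m -> R)
  (a : 'M[R]_(m, n)) A j :
  \sum_(i < m) `|restr (~: A) a i j| * w i = \sum_(i in [set: 'I_m] | (i, j) \notin A) `|a i j| * w i.
Proof.
rewrite [RHS]big_mkcond /=; apply: eq_bigr => i _; rewrite mxE !inE /=.
by case: ((i, j) \in A) => //=; rewrite normr0 mul0r.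
Qed.

Lemma main_split (R : realType) (m n : nat)
  (mu : 'I_m -> R) (nu : 'I_n -> R)
  (hmu : forall i, 0 < mu i) (hnu : forall j, 0 < nu j)
  (t : R) (ht : 0 < t) (a : 'M[R]_(m, n)) :
  exists A : {set 'I_m * 'I_n},
    rownorm nu (restr A a) <= tnorm mu nu t a /\
    colnorm mu (restr (~: A) a) <= tnorm mu nu t a / t.
Proof.
have hs : 0 <= tnorm mu nu t a by rewrite /tnorm bigmax0_ge0.
have [A [h1 h2]] := @split_core R m n mu nu hmu hnu t ht a _ hs
  (@tnorm_bound R m n mu nu hmu hnu t ht a) _ [set: 'I_m] [set: 'I_n] (leqnn _).
exists A; split.
  apply: bigmax_le => // i _; rewrite sum_restr; exact: h1.
apply: bigmax_le; first by rewrite divr_ge0 // ltW.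
move=> j _; rewrite sum_restrT; exact: h2.
Qed.

Theorem proposition1p1 (R : realType) (m n : nat)
  (mu : 'I_m -> R) (nu : 'I_n -> R)
  (hmu : forall i, 0 < mu i) (hnu : forall j, 0 < nu j)
  (t : R) (ht : 0 < t) :
  (forall a : 'M[R]_(m, n), tnorm mu nu t a <= 1 ->
     exists A B : {set 'I_m * 'I_n},
       [/\ A :|: B = [set: 'I_m * 'I_n], A :&: B = finset.set0,
           rownorm nu (restr A a) <= 1 &
           colnorm mu (restr B a) <= t^-1])
  /\ (forall a : 'M[R]_(m, n), Kt mu nu t a <= 2 * tnorm mu nu t a).
Proof.
split.
  move=> a hT.
  have [A [h1 h2]] := @main_split R m n mu nu hmu hnu t ht a.
  exists A, (~: A); split.
  - exact: finset.setUCr.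
  - exact: finset.setICr.
  - exact: le_trans hT.
  - apply: le_trans h2 _; rewrite -[X in _ <= X]mul1r.
    by apply: ler_wpM2r => //; rewrite invr_ge0 ltW.
move=> a.
have [A [h1 h2]] := @main_split R m n mu nu hmu hnu t ht a.
have hlb : has_lbound (fun x : R => exists b c : 'M[R]_(m, n),
         a = b + c /\ x = rownorm nu b + t * colnorm mu c).
  exists 0 => x [b [c [_ ->]]].
  rewrite /rownorm /colnorm addr_ge0 //; first exact: bigmax_ge_id.
  by rewrite mulr_ge0 ?(ltW ht) //; exact: bigmax_ge_id.
apply: le_trans (ge_inf hlb _) _.
  exists (restr A a), (restr (~: A) a); split; last by [].
  apply/matrixP => i j; rewrite !mxE !inE.
  by case: ((i, j) \in A) => /=; rewrite ?addr0 ?add0r.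
rewrite mulr2n mulrDl mul1r; apply: lerD; first exact: h1.
apply: le_trans (ler_wpM2l (ltW ht) h2) _.
by rewrite mulrCA mulfV ?gt_eqF // mulr1.
Qed.
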